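(* Let $f:[0,\infty)\to[0,\infty)$ be continuously differentiable with $f>0$ on $[t_0,\infty)$ for some $t_0\ge0$ and $f\in C^2([t_0,\infty))$, let $g=\log f$ on $[t_0,\infty)$, and assume condition (H1) of the context. Then for every $M>0$, $$\lim_{t\to\infty}\sup_{-M\le y\le M}\left|g\Big(t+\frac{y}{g'(t)}\Big)-g(t)-y\right|=0,$$ and in particular $$\lim_{t\to\infty}\sup_{-M\le y\le M}\left|\frac{f\big(t+\frac{y}{g'(t)}\big)}{f(t)}-e^{y}\right|=0=\lim_{t\to\infty}\sup_{-M\le y\le M}\left|\frac{f'\big(t+\frac{y}{g'(t)}\big)}{f'(t)}-e^{y}\right|.$$
   Context: Condition (H1): (i) $g'(t)>0$ and $g''(t)>0$ for all $t\ge t_0$, and there is a pair $(q,p)$ with either $q=1$ and $p\in(0,\infty]$, or $q\in(1,\infty)$ and $p\in(0,\infty)$, such that $\lim_{t\to\infty}\frac{g'(t)^2}{g(t)g''(t)}=q$ and $\lim_{t\to\infty}\frac{tg'(t)}{g(t)}=p$; (ii) if $q=1$, then $tg'(t)/g(t)$ is nondecreasing on $[t_0,\infty)$ and there exist $k\in\mathbb{N}$ and $\hat g\in C^2([t_0,\infty))$ with $f=\exp_k\circ\hat g$ and $\hat g'/\hat g$ nonincreasing on $[t_0,\infty)$ ($\exp_1=\exp$, $\exp_k=\exp_{k-1}\circ\exp$). *)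

(* Defs.v *)
From Stdlib Require Import Reals.
From Coquelicot Require Import Coquelicot.
Open Scope R_scope.

Definition deriv_on_Ici (F F' : R -> R) (a : R) : Prop :=
  (forall t, a < t -> is_derive F t (F' t)) /\
  filterlim (fun h => (F (a + h) - F a) / h) (at_right 0) (locally (F' a)).

Definition cont_on_Ici (F : R -> R) (a : R) : Prop :=
  forall t, a <= t ->
    filterlim F (within (fun x => a <= x) (locally t)) (locally (F t)).

Fixpoint expk (k : nat) : R -> R :=
  match k with
  | O => fun x => x
  | S k' => fun x => expk k' (exp x)
  end.

Definition sup_abs (M : R) (h : R -> R) : Rbar :=
  Lub_Rbar (fun z => exists y, -M <= y <= M /\ z = Rabs (h y)).

(* Main.v *)
Require Import Defs.
From Stdlib Require Import Reals Lra Psatz.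
From Coquelicot Require Import Coquelicot.
Open Scope R_scope.

Lemma arith1 A B u : 0 < A -> 0 < B -> 0 <= / A - / B <= u / A -> 0 <= u <= 1/2 ->
  Rabs (B / A - 1) <= 2 * u.
Proof.
  intros hA hB [h1 h2] hu.
  assert (e1 : / A - / B = (B - A) / (A * B)) by (field; lra).
  assert (e2 : u / A = u * B / (A * B)) by (field; lra).
  rewrite e1 in h1, h2; rewrite e2 in h2.
  assert (hAB : 0 < A * B) by nra.
  apply Rmult_le_compat_r with (r := A * B) in h1; [|lra].
  apply Rmult_le_compat_r with (r := A * B) in h2; [|lra].
  unfold Rdiv in h1, h2. rewrite !Rmult_assoc, Rinv_l in h1, h2; try lra.
  rewrite Rmult_0_l in h1.
  replace (u * B * / (A*B) * (A*B)) with (u*B) in h2 by (field; lra).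
  assert (B <= 2 * A) by nra.
  assert (u * B <= u * (2 * A)) by (apply Rmult_le_compat_l; lra).
  assert (e3 : B / A - 1 = (B - A) / A) by (field; lra).
  rewrite e3, Rabs_pos_eq.
  2: { unfold Rdiv; apply Rmult_le_pos; [lra| left; apply Rinv_0_lt_compat; lra]. }
  apply Rmult_le_reg_r with A; [lra|].
  unfold Rdiv; rewrite Rmult_assoc, Rinv_l; [|lra]. nra.
Qed.

Lemma arith2 A B e : 0 < A -> 0 < B -> 0 <= / B - / A <= e / A -> 0 <= e ->
  Rabs (B / A - 1) <= e.
Proof.
  intros hA hB [h1 h2] he.
  assert (e1 : / B - / A = (A - B) / (A * B)) by (field; lra).
  assert (e2 : e / A = e * B / (A * B)) by (field; lra).
  rewrite e1 in h1, h2; rewrite e2 in h2.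
  assert (hAB : 0 < A * B) by nra.
  apply Rmult_le_compat_r with (r := A * B) in h1; [|lra].
  apply Rmult_le_compat_r with (r := A * B) in h2; [|lra].
  unfold Rdiv in h1, h2. rewrite !Rmult_assoc, Rinv_l in h1, h2; try lra.
  rewrite Rmult_0_l in h1.
  replace (e * B * / (A*B) * (A*B)) with (e*B) in h2 by (field; lra).
  assert (e * B <= e * A) by (apply Rmult_le_compat_l; lra).
  assert (e3 : B / A - 1 = - ((A - B) / A)) by (field; lra).
  rewrite e3, Rabs_Ropp, Rabs_pos_eq.
  2: { unfold Rdiv; apply Rmult_le_pos; [lra| left; apply Rinv_0_lt_compat; lra]. }
  apply Rmult_le_reg_r with A; [lra|].
  unfold Rdiv; rewrite Rmult_assoc, Rinv_l; [|lra]. nra.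
Qed.

Lemma exp_near1 d : Rabs d <= 1/2 -> Rabs (exp d - 1) <= 2 * Rabs d.
Proof.
  intros hd.
  destruct (Rle_or_lt 0 d) as [h|h].
  - rewrite (Rabs_pos_eq d h).
    pose proof (exp_ineq1_le (- d)) as k. rewrite exp_Ropp in k.
    pose proof (exp_pos d) as p.
    assert (exp d - 1 <= 2 * d).
    { assert (k2 : (1 - d) * exp d <= 1).
      { apply Rmult_le_compat_r with (r := exp d) in k; [|lra].
        rewrite Rinv_l in k; lra. }
      rewrite Rabs_pos_eq in hd; nra. }
    pose proof (exp_ineq1_le d).
    rewrite Rabs_pos_eq; lra.
  - rewrite (Rabs_left d h).
    pose proof (exp_ineq1_le d).
    assert (exp d < 1) by (rewrite <- exp_0; apply exp_increasing; lra).
    rewrite Rabs_left; lra.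
Qed.

Section S.
Variables (t0 : R) (g g1 g2 : R -> R).
Hypothesis Hd1 : forall t, t0 < t -> is_derive g t (g1 t).
Hypothesis Hd2 : forall t, t0 < t -> is_derive g1 t (g2 t).
Hypothesis Hp1 : forall t, t0 < t -> 0 < g1 t.
Hypothesis Hp2 : forall t, t0 < t -> 0 < g2 t.

Lemma mvt2 (F F' : R -> R) (HF : forall t, t0 < t -> is_derive F t (F' t)) x y :
  t0 < x -> t0 < y ->
  exists c, Rmin x y <= c <= Rmax x y /\ F y - F x = F' c * (y - x).
Proof.
  intros hx hy.
  assert (hm : t0 < Rmin x y) by (apply Rmin_glb_lt; auto).
  destruct (MVT_gen F x y F') as [c Hc].
  - intros z [h1 h2]. apply HF. lra.
  - intros z [h1 h2]. apply continuity_pt_filterlim.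
    apply (ex_derive_continuous (K:=R_AbsRing) (V:=R_NormedModule)). exists (F' z). apply HF. lra.
  - exists c. exact Hc.
Qed.

Lemma g1_mono x y : t0 < x -> x <= y -> g1 x <= g1 y.
Proof.
  intros hx hxy.
  destruct (mvt2 g1 g2 Hd2 x y hx ltac:(lra)) as [c [hc e]].
  rewrite Rmin_left in hc by lra.
  assert (0 < g2 c) by (apply Hp2; lra).
  nra.
Qed.

Lemma g_bounds x y : t0 < x -> x <= y ->
  g1 x * (y - x) <= g y - g x <= g1 y * (y - x).
Proof.
  intros hx hxy.
  destruct (mvt2 g g1 Hd1 x y hx ltac:(lra)) as [c [hc e]].
  rewrite Rmin_left in hc by lra. rewrite Rmax_right in hc by lra.
  assert (g1 x <= g1 c) by (apply g1_mono; lra).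
  assert (g1 c <= g1 y) by (apply g1_mono; lra).
  rewrite e; split; apply Rmult_le_compat_r; lra.
Qed.

Lemma g_inf K : exists T, t0 < T /\ forall t, T <= t -> K <= g t.
Proof.
  set (a := t0 + 1).
  assert (ha : 0 < g1 a) by (apply Hp1; unfold a; lra).
  exists (a + Rmax 0 ((K - g a) / g1 a)). split.
  { pose proof (Rmax_l 0 ((K - g a) / g1 a)). unfold a in *; lra. }
  intros t ht.
  pose proof (Rmax_l 0 ((K - g a) / g1 a)).
  pose proof (Rmax_r 0 ((K - g a) / g1 a)).
  destruct (g_bounds a t ltac:(unfold a; lra) ltac:(lra)) as [h1 _].
  assert (g1 a * ((K - g a) / g1 a) <= g1 a * (t - a)) by (apply Rmult_le_compat_l; lra).
  replace (g1 a * ((K - g a) / g1 a)) with (K - g a) in H1 by (field; lra).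
  lra.
Qed.

Lemma ratio_ev q : 1 <= q ->
  is_lim (fun t => g1 t ^ 2 / (g t * g2 t)) p_infty q ->
  exists T, t0 < T /\ forall t, T <= t -> 0 < g t /\ g t * g2 t < 2 * g1 t ^ 2.
Proof.
  intros hq hl.
  apply is_lim_spec in hl.
  destruct (hl (mkposreal (1/2) ltac:(lra))) as [T1 hT1].
  destruct (g_inf 1) as [T2 [hT2 hT2']].
  exists (Rmax (T1 + 1) T2). split.
  { pose proof (Rmax_r (T1+1) T2); lra. }
  intros t ht.
  pose proof (Rmax_r (T1+1) T2); pose proof (Rmax_l (T1+1) T2).
  assert (hg : 1 <= g t) by (apply hT2'; lra).
  assert (h2 : 0 < g2 t) by (apply Hp2; lra).
  specialize (hT1 t ltac:(lra)). cbv beta in hT1.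
  set (r := g1 t ^ 2 / (g t * g2 t)) in *.
  apply Rabs_def2 in hT1. destruct hT1 as [_ hr]. simpl in hr.
  split; [lra|].
  assert (e : g1 t ^ 2 = r * (g t * g2 t)) by (unfold r; field; nra).
  rewrite e.
  assert (0 < g t * g2 t) by nra.
  nra.
Qed.

Lemma Kb T1 c : t0 < T1 -> (forall t, T1 <= t -> 0 < g t /\ g t * g2 t < 2 * g1 t ^ 2) ->
  T1 <= c -> 0 <= g2 c / g1 c ^ 2 <= 2 / g c.
Proof.
  intros h0 hT hc. destruct (hT c hc) as [hg hr].
  assert (h1 : 0 < g1 c) by (apply Hp1; lra).
  assert (h2 : 0 < g2 c) by (apply Hp2; lra).
  assert (h3 : 0 < g1 c ^ 2) by (apply pow_lt; lra).
  split.
  - unfold Rdiv; apply Rmult_le_pos; [lra| left; apply Rinv_0_lt_compat; lra].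
  - apply Rmult_le_reg_r with (g c * g1 c ^ 2); [nra|].
    replace (g2 c / g1 c ^ 2 * (g c * g1 c ^ 2)) with (g c * g2 c) by (field; lra).
    replace (2 / g c * (g c * g1 c ^ 2)) with (2 * g1 c ^ 2) by (field; lra).
    lra.
Qed.

Lemma window M T1 : 0 < M -> t0 < T1 ->
  (forall t, T1 <= t -> 0 < g t /\ g t * g2 t < 2 * g1 t ^ 2) ->
  forall t s, T1 + M / g1 T1 <= t -> 4 * M <= g t - M -> Rabs (s - t) <= M / g1 t ->
  T1 <= s /\ Rabs (g1 s / g1 t - 1) <= 4 * M / (g t - M).
Proof.
  intros hM h0 hT t s ht hgt hs.
  assert (hT1p : 0 < g1 T1) by (apply Hp1; lra).
  assert (hq : 0 < M / g1 T1) by (unfold Rdiv; apply Rmult_lt_0_compat; [lra| apply Rinv_0_lt_compat; lra]).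
  assert (htT : T1 <= t) by lra.
  assert (hg1t : g1 T1 <= g1 t) by (apply g1_mono; lra).
  assert (hAt : 0 < g1 t) by lra.
  assert (hMM : M / g1 t <= M / g1 T1).
  { unfold Rdiv; apply Rmult_le_compat_l; [lra|]. apply Rinv_le_contravar; lra. }
  assert (hgt0 : 0 < g t) by (destruct (hT t htT); lra).
  assert (hsT : T1 <= s).
  { unfold Rabs in hs. destruct (Rcase_abs (s - t)); lra. }
  split; [exact hsT|].
  assert (hphi : forall x, t0 < x -> is_derive (fun y => / g1 y) x (- g2 x / g1 x ^ 2)).
  { intros x hx. apply is_derive_inv; [apply Hd2; auto| apply Rgt_not_eq, Hp1; auto]. }
  assert (hBs : 0 < g1 s) by (apply Hp1; lra).
  assert (hbound : 4 * M / g t <= 4 * M / (g t - M)).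
  { unfold Rdiv; apply Rmult_le_compat_l; [lra|]. apply Rinv_le_contravar; lra. }
  destruct (mvt2 (fun y => / g1 y) _ hphi t s ltac:(lra) ltac:(lra)) as [c [hc e]].
  cbv beta in e.
  destruct (Rle_or_lt t s) as [hts|hts].
  - rewrite Rmin_left in hc by lra. rewrite Rmax_right in hc by lra.
    rewrite Rabs_pos_eq in hs by lra.
    assert (hgc : g t <= g c) by (destruct (g_bounds t c ltac:(lra) ltac:(lra)); nra).
    destruct (Kb T1 c h0 hT ltac:(lra)) as [k1 k2].
    assert (k3 : 2 / g c <= 2 / g t).
    { unfold Rdiv; apply Rmult_le_compat_l; [lra|]. apply Rinv_le_contravar; lra. }
    assert (k4 : g2 c / g1 c ^ 2 * (s - t) <= 2 / g t * (M / g1 t)).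
    { apply Rmult_le_compat; lra. }
    assert (k5 : 0 <= g2 c / g1 c ^ 2 * (s - t)) by (apply Rmult_le_pos; lra).
    assert (hu : 2 * M / g t <= 1/2).
    { apply Rmult_le_reg_r with (g t); [lra|].
      replace (2 * M / g t * g t) with (2 * M) by (field; lra). lra. }
    assert (hu0 : 0 <= 2 * M / g t).
    { unfold Rdiv; apply Rmult_le_pos; [lra| left; apply Rinv_0_lt_compat; lra]. }
    assert (ek : / g1 t - / g1 s = g2 c / g1 c ^ 2 * (s - t)).
    { assert (hn : g1 c ^ 2 <> 0) by (apply pow_nonzero; apply Rgt_not_eq, Hp1; lra).
      rewrite <- (Ropp_involutive (/ g1 t - / g1 s)), Ropp_minus_distr, e. field; apply Rgt_not_eq, Hp1; lra. }
    eapply Rle_trans; [apply (arith1 (g1 t) (g1 s) (2 * M / g t)); auto|].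
    + split.
      * rewrite ek.
        lra.
      * rewrite ek.
        replace (2 * M / g t / g1 t) with (2 / g t * (M / g1 t)) by (field; lra). lra.
    + replace (2 * (2 * M / g t)) with (4 * M / g t) by (field; lra). lra.
  - rewrite Rmin_right in hc by lra. rewrite Rmax_left in hc by lra.
    rewrite Rabs_left in hs by lra.
    destruct (g_bounds s t ltac:(lra) ltac:(lra)) as [_ gb].
    destruct (g_bounds s c ltac:(lra) ltac:(lra)) as [gb2 _].
    assert (g1 t * (t - s) <= M).
    { apply Rmult_le_reg_r with (/ g1 t). apply Rinv_0_lt_compat; lra.
      replace (g1 t * (t - s) * / g1 t) with (t - s) by (field; lra). unfold Rdiv in hs. lra. }
    assert (0 <= g1 s * (c - s)) by (apply Rmult_le_pos; lra).
    assert (hgc : g t - M <= g c) by lra.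
    destruct (Kb T1 c h0 hT ltac:(lra)) as [k1 k2].
    assert (k3 : 2 / g c <= 2 / (g t - M)).
    { unfold Rdiv; apply Rmult_le_compat_l; [lra|]. apply Rinv_le_contravar; lra. }
    assert (k4 : g2 c / g1 c ^ 2 * (t - s) <= 2 / (g t - M) * (M / g1 t)).
    { apply Rmult_le_compat; lra. }
    assert (k5 : 0 <= g2 c / g1 c ^ 2 * (t - s)) by (apply Rmult_le_pos; lra).
    assert (hu0 : 0 <= 2 * M / (g t - M)).
    { unfold Rdiv; apply Rmult_le_pos; [lra| left; apply Rinv_0_lt_compat; lra]. }
    eapply Rle_trans; [apply (arith2 (g1 t) (g1 s) (2 * M / (g t - M))); auto|].
    + replace (/ g1 s - / g1 t) with (g2 c / g1 c ^ 2 * (t - s)) by (rewrite e; field; apply Rgt_not_eq, Hp1; lra).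
      split; [lra|].
      replace (2 * M / (g t - M) / g1 t) with (2 / (g t - M) * (M / g1 t)) by (field; lra). lra.
    + apply Rmult_le_compat_r; [left; apply Rinv_0_lt_compat; lra| lra].
Qed.
End S.

Lemma sup_lim M (H : R -> R -> R) (B : R -> R) : 0 <= M ->
  (exists T, forall t, T <= t -> forall y, -M <= y <= M -> Rabs (H t y) <= B t) ->
  (forall eps, 0 < eps -> exists T, forall t, T <= t -> B t < eps) ->
  filterlim (fun t => sup_abs M (fun y => H t y))
      (Rbar_locally p_infty) (Rbar_locally (Finite 0)).
Proof.
  intros hM [T1 hb] hB P [eps HP].
  destruct (hB eps (cond_pos eps)) as [T2 hT2].
  exists (Rmax T1 T2). intros t ht.
  pose proof (Rmax_l T1 T2); pose proof (Rmax_r T1 T2).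
  unfold sup_abs.
  set (E := fun z => exists y, -M <= y <= M /\ z = Rabs (H t y)).
  destruct (Lub_Rbar_correct E) as [ub lub].
  assert (hu : is_ub_Rbar E (Finite (B t))).
  { intros z [y [hy ->]]. simpl. apply hb; auto; lra. }
  specialize (lub _ hu).
  assert (h0 : E (Rabs (H t 0))) by (exists 0; split; [lra|reflexivity]).
  specialize (ub _ h0).
  specialize (hT2 t ltac:(lra)).
  pose proof (Rabs_pos (H t 0)).
  destruct (Lub_Rbar E) as [r| |]; simpl in ub, lub; try contradiction.
  apply HP. unfold ball; simpl; unfold AbsRing_ball; simpl.
  unfold abs, minus, plus, opp; simpl.
  rewrite Ropp_0, Rplus_0_r, Rabs_pos_eq; lra.
Qed.

Theorem lemma2p6
  (f f1 f2 : R -> R) (t0 : R) (g g1 g2 : R -> R) (q : R) (p : Rbar)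
  (* f : [0,oo) -> [0,oo), continuously differentiable, f1 = f' *)
  (Hf_nonneg : forall t, 0 <= t -> 0 <= f t)
  (Hf_C1 : deriv_on_Ici f f1 0)
  (Hf1_cont : cont_on_Ici f1 0)
  (* t0 >= 0, f > 0 on [t0,oo), f in C^2([t0,oo)), f2 = f'' *)
  (Ht0 : 0 <= t0)
  (Hf_pos : forall t, t0 <= t -> 0 < f t)
  (Hf_C2 : deriv_on_Ici f1 f2 t0)
  (Hf2_cont : cont_on_Ici f2 t0)
  (* g = log f on [t0,oo), g1 = g', g2 = g'' on [t0,oo) *)
  (Hg : forall t, t0 <= t -> g t = ln (f t))
  (Hg1 : deriv_on_Ici g g1 t0)
  (Hg2 : deriv_on_Ici g1 g2 t0)
  (* (H1)(i) *)
  (Hg1_pos : forall t, t0 <= t -> 0 < g1 t)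
  (Hg2_pos : forall t, t0 <= t -> 0 < g2 t)
  (Hqp : (q = 1 /\ Rbar_lt (Finite 0) p) \/
         (1 < q /\ exists p', p = Finite p' /\ 0 < p'))
  (Hlim_q : is_lim (fun t => g1 t ^ 2 / (g t * g2 t)) p_infty q)
  (Hlim_p : is_lim (fun t => t * g1 t / g t) p_infty p)
  (* (H1)(ii) *)
  (Hq1 : q = 1 ->
     (forall s t, t0 <= s -> s <= t -> s * g1 s / g s <= t * g1 t / g t) /\
     exists (k : nat) (gh gh1 gh2 : R -> R),
       (1 <= k)%nat /\
       deriv_on_Ici gh gh1 t0 /\ deriv_on_Ici gh1 gh2 t0 /\
       cont_on_Ici gh2 t0 /\
       (forall t, t0 <= t -> f t = expk k (gh t)) /\
       (forall s t, t0 <= s -> s <= t -> gh1 t / gh t <= gh1 s / gh s)) :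
  forall M : R, 0 < M ->
    filterlim
      (fun t => sup_abs M (fun y => g (t + y / g1 t) - g t - y))
      (Rbar_locally p_infty) (Rbar_locally (Finite 0)) /\
    filterlim
      (fun t => sup_abs M (fun y => f (t + y / g1 t) / f t - exp y))
      (Rbar_locally p_infty) (Rbar_locally (Finite 0)) /\
    filterlim
      (fun t => sup_abs M (fun y => f1 (t + y / g1 t) / f1 t - exp y))
      (Rbar_locally p_infty) (Rbar_locally (Finite 0)).
Proof.
  intros M hM.
  destruct Hg1 as [Hd1 _]. destruct Hg2 as [Hd2 _]. destruct Hf_C1 as [Hdf _].
  assert (Hp1 : forall t, t0 < t -> 0 < g1 t) by (intros; apply Hg1_pos; lra).
  assert (Hp2 : forall t, t0 < t -> 0 < g2 t) by (intros; apply Hg2_pos; lra).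
  assert (hq : 1 <= q) by (destruct Hqp as [[-> _]|[h _]]; lra).
  destruct (ratio_ev t0 g g1 g2 Hd1 Hd2 Hp1 Hp2 q hq Hlim_q) as [T1 [h0 hT]].
  destruct (g_inf t0 g g1 g2 Hd1 Hd2 Hp1 Hp2 (M + 8 * M * (M + 1))) as [T3 [_ hT3]].
  set (ep := fun t => 4 * M / (g t - M)).
  set (T := Rmax (T1 + M / g1 T1) T3).
  assert (hfexp : forall x, t0 < x -> f x = exp (g x)).
  { intros x hx. rewrite Hg by lra. rewrite exp_ln; auto. apply Hf_pos; lra. }
  assert (hf1 : forall x, t0 < x -> f1 x = f x * g1 x).
  { intros x hx.
    assert (hfx : 0 < f x) by (apply Hf_pos; lra).
    assert (hd : is_derive g x (f1 x * / f x)).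
    { apply (is_derive_ext_loc (fun u => ln (f u))).
      - assert (hpos : 0 < x - t0) by lra.
        exists (mkposreal _ hpos). intros u hu.
        unfold ball in hu; simpl in hu; unfold AbsRing_ball in hu; simpl in hu.
        unfold abs, minus, plus, opp in hu; simpl in hu.
        apply Rabs_def2 in hu. rewrite Hg; [reflexivity| lra].
      - apply (is_derive_comp ln f x (/ f x) (f1 x)).
        + apply is_derive_ln; auto.
        + apply Hdf; lra. }
    apply is_derive_unique in hd. rewrite (is_derive_unique _ _ _ (Hd1 x hx)) in hd.
    rewrite hd. field. lra. }
  assert (core : forall t, T <= t -> forall y, -M <= y <= M ->
    T1 <= t + y / g1 t /\ T1 <= t /\ 0 <= ep t /\ ep t <= 1/2 /\ M * ep t <= 1/2 /\
    Rabs (g1 (t + y / g1 t) / g1 t - 1) <= ep t /\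
    Rabs (g (t + y / g1 t) - g t - y) <= M * ep t).
  { intros t ht y hy. unfold T in ht.
    pose proof (Rmax_l (T1 + M / g1 T1) T3); pose proof (Rmax_r (T1 + M / g1 T1) T3).
    assert (hT1p : 0 < g1 T1) by (apply Hp1; lra).
    assert (hq' : 0 < M / g1 T1) by (unfold Rdiv; apply Rmult_lt_0_compat; [lra| apply Rinv_0_lt_compat; lra]).
    assert (hg : M + 8 * M * (M + 1) <= g t) by (apply hT3; lra).
    assert (ht1 : T1 + M / g1 T1 <= t) by lra.
    assert (hgt : 4 * M <= g t - M) by nra.
    assert (hA : 0 < g1 t) by (apply Hp1; lra).
    assert (hD : 0 < g t - M) by lra.
    assert (hep0 : 0 <= ep t) by (unfold ep, Rdiv; apply Rmult_le_pos; [lra| left; apply Rinv_0_lt_compat; lra]).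
    assert (hepM : (M + 1) * ep t <= 1/2).
    { unfold ep. apply Rmult_le_reg_r with (g t - M); [lra|].
      replace ((M + 1) * (4 * M / (g t - M)) * (g t - M)) with ((M+1) * (4 * M)) by (field; lra).
      nra. }
    assert (hys : Rabs (t + y / g1 t - t) <= M / g1 t).
    { replace (t + y / g1 t - t) with (y * / g1 t) by (field; lra).
      rewrite Rabs_mult, (Rabs_pos_eq (/ g1 t)) by (left; apply Rinv_0_lt_compat; lra).
      apply Rmult_le_compat_r; [left; apply Rinv_0_lt_compat; lra|].
      apply Rabs_le; lra. }
    destruct (window t0 g g1 g2 Hd1 Hd2 Hp1 Hp2 M T1 hM h0 hT t (t + y / g1 t) ht1 hgt hys) as [hs1 hs2].
    assert (htT : T1 <= t) by lra.
    destruct (mvt2 t0 g g1 Hd1 t (t + y / g1 t) ltac:(lra) ltac:(lra)) as [c [hc e]].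
    assert (hct : Rabs (c - t) <= M / g1 t).
    { eapply Rle_trans; [|exact hys].
      unfold Rmin, Rmax in hc. destruct (Rle_dec t (t + y / g1 t)).
      - rewrite Rabs_pos_eq by lra. rewrite Rabs_pos_eq by lra. lra.
      - rewrite Rabs_left1 by lra. rewrite Rabs_left1 by lra. lra. }
    destruct (window t0 g g1 g2 Hd1 Hd2 Hp1 Hp2 M T1 hM h0 hT t c ht1 hgt hct) as [hc1 hc2].
    fold (ep t) in hs2, hc2.
    assert (ep t <= 1/2) by nra. assert (M * ep t <= 1/2) by nra.
    repeat split; try lra.
    replace (g (t + y / g1 t) - g t - y) with (y * (g1 c / g1 t - 1)).
    2: { rewrite e. field. lra. }
    rewrite Rabs_mult. apply Rmult_le_compat; try apply Rabs_pos; auto.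
    apply Rabs_le; lra. }
  assert (eps_lim : forall C, 0 <= C -> forall eps, 0 < eps ->
    exists T', forall t, T' <= t -> C * ep t < eps).
  { intros C hC eps heps.
    destruct (g_inf t0 g g1 g2 Hd1 Hd2 Hp1 Hp2 (M + 1 + 4 * M * C / eps)) as [T4 [_ hT4]].
    exists T4. intros t ht. specialize (hT4 t ht).
    assert (h4 : 0 <= 4 * M * C / eps) by (unfold Rdiv; apply Rmult_le_pos; [nra| left; apply Rinv_0_lt_compat; lra]).
    unfold ep. 
    replace (C * (4 * M / (g t - M))) with ((4 * M * C) / (g t - M)) by (field; lra).
    apply Rmult_lt_reg_r with (g t - M); [lra|].
    replace (4 * M * C / (g t - M) * (g t - M)) with (4 * M * C) by (field; lra).
    assert (e4 : 4 * M * C = eps * (4 * M * C / eps)) by (field; lra).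
    rewrite e4 at 1. nra. }
  assert (hexpM : forall y, -M <= y <= M -> 0 < exp y <= exp M).
  { intros y hy. split; [apply exp_pos|].
    destruct (Req_dec y M) as [->|hne]; [lra|]. left; apply exp_increasing; lra. }
  assert (part2 : forall t, T <= t -> forall y, -M <= y <= M ->
     Rabs (f (t + y / g1 t) / f t - exp y) <= exp M * 2 * M * ep t).
  { intros t ht y hy.
    destruct (core t ht y hy) as [c1 [c2 [c3 [c4 [c5 [c6 c7]]]]]].
    rewrite !hfexp by lra.
    set (d := g (t + y / g1 t) - g t - y) in *.
    replace (exp (g (t + y / g1 t)) / exp (g t) - exp y) with (exp y * (exp d - 1)).
    2: { unfold d. replace (g (t + y / g1 t)) with ((g (t + y / g1 t) - g t - y) + y + g t) at 2 by ring.
         rewrite !exp_plus. field. apply Rgt_not_eq, exp_pos. }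
    rewrite Rabs_mult, (Rabs_pos_eq (exp y)) by (left; apply exp_pos).
    assert (hd : Rabs d <= 1/2) by lra.
    pose proof (exp_near1 d hd).
    destruct (hexpM y hy).
    replace (exp M * 2 * M * ep t) with (exp M * (2 * (M * ep t))) by ring.
    apply Rmult_le_compat; try lra; try apply Rabs_pos. }
  split; [|split].
  - apply (sup_lim M (fun t y => g (t + y / g1 t) - g t - y) (fun t => M * ep t)); [lra| |].
    + exists T. intros t ht y hy. apply (core t ht y hy).
    + apply eps_lim. lra.
  - apply (sup_lim M (fun t y => f (t + y / g1 t) / f t - exp y) (fun t => exp M * 2 * M * ep t)); [lra| |].
    + exists T. exact part2.
    + intros eps heps. destruct (eps_lim (exp M * 2 * M) ltac:(pose proof (exp_pos M); nra) eps heps) as [T' hT'].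
      exists T'. intros t ht. specialize (hT' t ht). lra.
  - apply (sup_lim M (fun t y => f1 (t + y / g1 t) / f1 t - exp y) (fun t => (exp M * 4 * M + exp M) * ep t)); [lra| |].
    + exists T. intros t ht y hy.
      destruct (core t ht y hy) as [c1 [c2 [c3 [c4 [c5 [c6 c7]]]]]].
      pose proof (part2 t ht y hy) as p2.
      assert (hft : 0 < f t) by (apply Hf_pos; lra).
      assert (hgt : 0 < g1 t) by (apply Hp1; lra).
      rewrite !hf1 by lra.
      set (X := f (t + y / g1 t) / f t) in *.
      set (Y := g1 (t + y / g1 t) / g1 t) in *.
      replace (f (t + y / g1 t) * g1 (t + y / g1 t) / (f t * g1 t) - exp y)
        with ((X - exp y) * Y + exp y * (Y - 1)) by (unfold X, Y; field; lra).
      destruct (hexpM y hy).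
      eapply Rle_trans; [apply Rabs_triang|].
      rewrite !Rabs_mult, (Rabs_pos_eq (exp y)) by lra.
      assert (hY : Rabs Y <= 2).
      { replace Y with ((Y - 1) + 1) by ring. eapply Rle_trans; [apply Rabs_triang|].
        rewrite Rabs_R1. lra. }
      assert (Rabs (X - exp y) * Rabs Y <= (exp M * 2 * M * ep t) * 2)
        by (apply Rmult_le_compat; try apply Rabs_pos; lra).
      assert (exp y * Rabs (Y - 1) <= exp M * ep t)
        by (apply Rmult_le_compat; try apply Rabs_pos; lra).
      lra.
    + apply eps_lim. pose proof (exp_pos M). nra.
Qed.
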